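(* Let $\mathcal{X}\subseteq\mathbb{R}^n$ be compact. Then $\mathcal{X}$ is standard comonotone if and only if its convex hull $\operatorname{conv}(\mathcal{X})$ is standard comonotone.
   Context: $\Pi_n$ is the set of permutations of $[n]$; for $\pi\in\Pi_n$, $\mathcal{Z}(\pi)=\{x\in\mathbb{R}^n: x_{\pi(1)}\ge\cdots\ge x_{\pi(n)}\}$. A set $\mathcal{X}\subseteq\mathbb{R}^n$ is standard comonotone if for every $\pi\in\Pi_n$ and every $v\in\mathcal{Z}(\pi)$, whenever $\max_{x\in\mathcal{X}}v^\top x$ attains its optimum, it has an optimal solution in $\mathcal{Z}(\pi)$. *)

(* Defs.v *)
(* R^n is 'rV[R]_n for R : realType,
   with the product (matrix) topology of mathcomp-analysis. *)
From HB Require Import structures.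
From mathcomp Require Import all_boot all_order all_algebra all_fingroup.
From mathcomp Require Import all_classical all_reals all_analysis.
Set Implicit Arguments. Unset Strict Implicit. Unset Printing Implicit Defensive.
Import Order.TTheory GRing.Theory Num.Theory.
Import numFieldNormedType.Exports.
Local Open Scope classical_set_scope.
Local Open Scope ring_scope.

Definition dotv (R : realType) (n : nat) (v x : 'rV[R]_n) : R :=
  \sum_(i < n) v ord0 i * x ord0 i.

(* Z(pi) = { x : x_{pi(1)} >= ... >= x_{pi(n)} } (0-based indices) *)
Definition Zcone (R : realType) (n : nat) (pi : 'S_n) : set 'rV[R]_n :=
  [set x | forall i j : 'I_n, (i <= j)%N -> x ord0 (pi j) <= x ord0 (pi i)].

Definition is_argmax (R : realType) (n : nat) (X : set 'rV[R]_n) (v x0 : 'rV[R]_n) :=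
  X x0 /\ forall x, X x -> dotv v x <= dotv v x0.

Definition standard_comonotone (R : realType) (n : nat) (X : set 'rV[R]_n) :=
  forall (pi : 'S_n) (v : 'rV[R]_n), Zcone pi v ->
    (exists x0, is_argmax X v x0) ->
    exists2 x0, is_argmax X v x0 & Zcone pi x0.

Definition conv_hull (R : realType) (n : nat) (X : set 'rV[R]_n) : set 'rV[R]_n :=
  [set x | exists (k : nat) (p : 'I_k -> 'rV[R]_n) (w : 'I_k -> R),
     [/\ forall i, X (p i), forall i, 0 <= w i, \sum_(i < k) w i = 1
       & x = \sum_(i < k) w i *: p i]].

(* Main.v *)
Require Import Defs.
From HB Require Import structures.
From mathcomp Require Import all_boot all_order all_algebra all_fingroup.
From mathcomp Require Import all_classical all_reals all_analysis.
From mathcomp Require Import ring lra.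
Set Implicit Arguments. Unset Strict Implicit. Unset Printing Implicit Defensive.
Import Order.TTheory GRing.Theory Num.Theory.
Import numFieldNormedType.Exports.
Local Open Scope classical_set_scope.
Local Open Scope ring_scope.

Section S.
Variables (R : realType) (n : nat).
Implicit Types (x y v : 'rV[R]_n).

Lemma cont_sum (k : nat) (f : 'I_k -> 'rV[R]_n -> R) :
  (forall i, continuous (f i)) -> continuous (fun x => \sum_(i < k) f i x).
Proof.
elim: k f => [|k IH] f fc.
  rewrite (_ : (fun x => _) = (fun _ => 0)); first exact: cst_continuous.
  by apply: funext => x; rewrite big_ord0.
rewrite (_ : (fun x => _) = (fun x => \sum_(i < k) f (widen_ord (leqnSn k) i) x + f ord_max x)); last first.
  by apply: funext => x; rewrite big_ord_recr.
move=> x; exact: (cvgD (IH (fun i => f (widen_ord (leqnSn k) i)) (fun i => fc _) x) (fc ord_max x)).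
Qed.

Lemma cont_coord (g : 'rV[R]_n -> 'rV[R]_n) j :
  continuous g -> continuous (fun x => g x ord0 j).
Proof. move=> gc x; exact: (continuous_comp (gc x) (@coord_continuous R 1 n ord0 j (g x))). Qed.

Lemma cont_dotv (g h : 'rV[R]_n -> 'rV[R]_n) :
  continuous g -> continuous h -> continuous (fun x => dotv (g x) (h x)).
Proof.
move=> gc hc; rewrite /dotv; apply: cont_sum => j x.
have H := continuousM (@cont_coord g j gc x) (@cont_coord h j hc x). exact: H.
Qed.

Lemma Zcone_closed (pi : 'S_n) : closed (@Zcone R n pi).
Proof.
have -> : @Zcone R n pi = \bigcap_(ij in [set ij : 'I_n * 'I_n | (ij.1 <= ij.2)%N])
   ((fun x : 'rV[R]_n => x ord0 (pi ij.2) - x ord0 (pi ij.1)) @^-1` [set r | r <= 0]).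
  apply/seteqP; split => x /=.
    by move=> H [i j] /= ij; rewrite subr_le0; apply: H.
  by move=> H i j ij; have := H (i, j) ij; rewrite /= subr_le0.
apply: closed_bigI => ij _; apply: preimage_closed; last exact: closed_le.
move=> x _; exact: (cvgB (@coord_continuous R 1 n ord0 (pi ij.2) x) (@coord_continuous R 1 n ord0 (pi ij.1) x)).
Qed.


Lemma dotv_comb k (w : 'I_k -> R) (p : 'I_k -> 'rV[R]_n) v :
  dotv v (\sum_(i < k) w i *: p i) = \sum_(i < k) w i * dotv v (p i).
Proof.
rewrite /dotv; under eq_bigr => j _ do rewrite summxE mulr_sumr.
rewrite exchange_big /=; apply: eq_bigr => i _; rewrite mulr_sumr.
by apply: eq_bigr => j _; rewrite mxE mulrCA.
Qed.

Lemma conv_single (X : set 'rV[R]_n) x : X x -> conv_hull X x.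
Proof.
move=> Xx; exists 1%N, (fun _ => x), (fun _ => 1); split => //.
  by rewrite big_ord1.
by rewrite big_ord1 scale1r.
Qed.

Lemma conv_le (X : set 'rV[R]_n) v c y :
  (forall x, X x -> dotv v x <= c) -> conv_hull X y -> dotv v y <= c.
Proof.
move=> H [k [p [w [Xp w0 w1 ->]]]]; rewrite dotv_comb.
apply: (@le_trans _ _ (\sum_(i < k) w i * c)).
  by apply: ler_sum => i _; apply: ler_wpM2l => //; apply: H.
by rewrite -mulr_suml w1 mul1r.
Qed.

Lemma conv_ge (X : set 'rV[R]_n) v y :
  conv_hull X y -> exists2 p, X p & dotv v y <= dotv v p.
Proof.
move=> [k [p [w [Xp w0 w1 ->]]]]; rewrite dotv_comb.
case: k p w Xp w0 w1 => [|k] p w Xp w0 w1.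
  by move: w1; rewrite big_ord0 => /eqP; rewrite eq_sym oner_eq0.
have [i0 Hi0] : exists i0 : 'I_k.+1, forall j, dotv v (p j) <= dotv v (p i0).
  have := @Order.TotalTheory.arg_maxP _ R _ ord0 xpredT (fun i => dotv v (p i)) isT.
  by case=> i _ H; exists i => j; apply: H.
exists (p i0); first exact: Xp.
apply: (@le_trans _ _ (\sum_(i < k.+1) w i * dotv v (p i0))); last first.
  by rewrite -mulr_suml w1 mul1r.
by apply: ler_sum => i _; apply: ler_wpM2l.
Qed.

Lemma dotv_sq_ge0 x : 0 <= dotv x x.
Proof. by apply: sumr_ge0 => i _; rewrite -expr2 sqr_ge0. Qed.

Lemma dotv_sq_eq0 x : dotv x x = 0 -> x = 0.
Proof.
move=> /eqP; rewrite psumr_eq0; last by move=> i _; rewrite -expr2 sqr_ge0.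
move=> /allP H; apply/matrixP => i j; rewrite ord1 mxE.
by have := H j (mem_index_enum _); rewrite -expr2 sqrf_eq0 => /eqP.
Qed.

Lemma dir1 (X : set 'rV[R]_n) :
  standard_comonotone X -> standard_comonotone (conv_hull X).
Proof.
move=> SC pi v Zv [y0 [Cy0 Hy0]].
have [p Xp yp] := conv_ge v Cy0.
have [|x1 [Xx1 Hx1] Zx1] := SC pi v Zv.
  exists p; split => // x Xx; apply: le_trans yp; apply: Hy0; exact: conv_single.
exists x1 => //; split; first exact: conv_single.
by move=> y Cy; apply: (conv_le Hx1).
Qed.


Lemma dotv_expand x q a :
  dotv (x - a) (x - a) = dotv (q - a) (q - a)
    - 2 * (dotv (q - a) q - dotv (q - a) x) + dotv (x - q) (x - q).
Proof.
rewrite /dotv -sumrB mulr_sumr -sumrB -big_split /=.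
by apply: eq_bigr => j _; rewrite !mxE; ring.
Qed.

Lemma dotv_split3 (q x0 u v a : 'rV[R]_n) (s t : R) :
  a = - (s *: u + t *: v) ->
  dotv (q - a) q - dotv (q - a) x0 =
  dotv (q + s *: u) (q - x0) + t * (dotv v q - dotv v x0).
Proof.
move=> ->; rewrite /dotv -!sumrB mulr_sumr -big_split /=.
by apply: eq_bigr => j _; rewrite !mxE; ring.
Qed.

Lemma cont_addc (c : 'rV[R]_n) : continuous (fun x : 'rV[R]_n => x + c).
Proof. by move=> x; exact: (cvgD cvg_id (cvg_cst c)). Qed.

Lemma sq_le_sum2 (F : 'I_n -> 'I_n -> R) a b :
  (forall a b, 0 <= F a b) -> F a b <= \sum_(a < n) \sum_(b < n) F a b.
Proof.
move=> F0; rewrite (bigD1 a) //= (bigD1 b) //=.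
rewrite -addrA lerDl; apply: addr_ge0; apply: sumr_ge0 => // i _.
by apply: sumr_ge0.
Qed.


Lemma dir2 (X : set 'rV[R]_n) :
  compact X -> standard_comonotone (conv_hull X) -> standard_comonotone X.
Proof.
move=> cX SC pi v Zv [x0 [Xx0 Hx0]].
have cK : compact (X `&` @Zcone R n pi) := compact_closedI cX (@Zcone_closed pi).
have X0 : X !=set0 by exists x0.
pose u : 'rV[R]_n := \row_k (- ((pi^-1)%g k)%:R).
pose B (x : 'rV[R]_n) := \sum_(a < n) \sum_(b < n) ((x ord0 a - x ord0 b) * (x ord0 a - x ord0 b)).
have Bc : continuous B.
  apply: cont_sum => a; apply: cont_sum => b x.
  exact: (cvgM (cvgB (@coord_continuous R 1 n ord0 a x) (@coord_continuous R 1 n ord0 b x))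
               (cvgB (@coord_continuous R 1 n ord0 a x) (@coord_continuous R 1 n ord0 b x))).
have [xm _ HM] := EVT_max_rV X0 cX (continuous_subspaceT Bc).
pose s := 1 + B xm.
have B0 : forall x, 0 <= B x.
  move=> x; apply: sumr_ge0 => a _; apply: sumr_ge0 => b _; rewrite -expr2; exact: sqr_ge0.
have s1 : 1 <= s by rewrite /s lerDl.
have gap : forall x, X x -> forall a b, x ord0 a - x ord0 b <= s.
  move=> x Xx a b.
  have h1 : (x ord0 a - x ord0 b) * (x ord0 a - x ord0 b) <= B x.
    apply: (@sq_le_sum2 (fun a b => (x ord0 a - x ord0 b) * (x ord0 a - x ord0 b))).
    by move=> ? ?; rewrite -expr2; exact: sqr_ge0.
  have h2 : B x <= B xm by apply: HM; exact: mem_set.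
  move: h1 h2; rewrite /s; set z := x ord0 a - x ord0 b => h1 h2.
  have h3 : 0 <= (z - 1) * (z - 1) by rewrite -expr2; exact: sqr_ge0.
  nra.
pose h (x : 'rV[R]_n) := dotv (x + s *: u) (x - x0).
have hc : continuous h.
  apply: cont_dotv; first exact: cont_addc.
  exact: cont_addc.
have [xc _ HC] := EVT_max_rV X0 cX (continuous_subspaceT hc).
pose C := h xc.
have C0 : 0 <= C.
  have -> : 0 = h x0.
    by rewrite /h subrr /dotv big1 // => j _; rewrite !mxE mulr0.
  by apply: HC; exact: mem_set.
have claim : forall t, 0 <= t ->
    exists2 q, (X `&` @Zcone R n pi) q & t * (dotv v x0 - dotv v q) <= C.
  move=> t t0.
  pose a := - (s *: u + t *: v).
  pose f (x : 'rV[R]_n) := dotv (x - a) (x - a).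
  have fc : continuous f by apply: cont_dotv; exact: cont_addc.
  have [q /set_mem Xq Hq] := EVT_max_rV X0 cX (continuous_subspaceT fc).
  pose d := q - a.
  have far : forall x, X x -> dotv (x - q) (x - q) <= 2 * (dotv d q - dotv d x).
    move=> x Xx; have := Hq x (mem_set Xx); rewrite /f (dotv_expand x q a) -/d.
    lra.
  have farle : forall x, X x -> dotv d x <= dotv d q.
    move=> x Xx; have := far x Xx; have := dotv_sq_ge0 (x - q); lra.
  have dE : forall k, d ord0 k = q ord0 k + s * u ord0 k + t * v ord0 k.
    by move=> k; rewrite /d /a !mxE; ring.
  have uE : forall i, u ord0 (pi i) = - (i%:R).
    by move=> i; rewrite /u mxE permK.
  have Zd : Zcone pi d.
    move=> i j; rewrite leq_eqVlt => /orP [/eqP/val_inj -> // | ij].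
    rewrite !dE !uE.
    have hij : (i%:R + 1 <= j%:R :> R) by rewrite natr1 ler_nat.
    have g1 := gap q Xq (pi j) (pi i).
    have v1 : v ord0 (pi j) <= v ord0 (pi i) by apply: Zv; exact: ltnW.
    have m1 : 0 <= t * (v ord0 (pi i) - v ord0 (pi j)) by apply: mulr_ge0 => //; lra.
    have m2 : 0 <= (s - 1 + 1) * (j%:R - i%:R - 1) by apply: mulr_ge0; lra.
    nra.
  have [|y [Cy Hy] Zy] := SC pi d Zd.
    exists q; split; first exact: conv_single.
    by move=> y Cy; apply: (conv_le farle).
  have yq : y = q.
    have Hyq := Hy q (conv_single Xq).
    move: Cy Hyq Zy => [k [p [w [Xp w0 w1 yE]]]] Hyq Zy.
    pose e i := w i * (dotv d q - dotv d (p i)).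
    have e0 : forall i, 0 <= e i.
      move=> i; apply: mulr_ge0 => //; have := farle _ (Xp i); lra.
    have esum : \sum_(i < k) e i = dotv d q - dotv d y.
      rewrite yE dotv_comb /e.
      under eq_bigr => i _ do rewrite mulrBr.
      by rewrite sumrB -mulr_suml w1 mul1r.
    have ez : forall i, e i = 0.
      have : \sum_(i < k) e i == 0.
        have s0 : 0 <= \sum_(i < k) e i by apply: sumr_ge0 => i _; exact: e0.
        by rewrite eq_le s0 andbT esum; lra.
      rewrite psumr_eq0; last by move=> i _; exact: e0.
      by move=> /allP H i; apply/eqP; apply: H; exact: mem_index_enum.
    have term : forall i, w i *: (p i - q) = 0.
      move=> i.
      have : w i * dotv (p i - q) (p i - q) <= 2 * e i.
        rewrite /e mulrCA; apply: ler_wpM2l => //; exact: far.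
      rewrite ez mulr0 => H.
      have : w i * dotv (p i - q) (p i - q) = 0.
        apply/eqP; rewrite eq_le H /=; apply: mulr_ge0 => //; exact: dotv_sq_ge0.
      move/eqP; rewrite mulf_eq0 => /orP [/eqP -> | /eqP/dotv_sq_eq0 ->].
        by rewrite scale0r.
      by rewrite scaler0.
    apply/eqP; rewrite -subr_eq0; apply/eqP.
    have -> : q = \sum_(i < k) w i *: q by rewrite -scaler_suml w1 scale1r.
    rewrite yE -sumrB big1 // => i _; rewrite -scalerBr; exact: term.
  exists q; first by split => //; rewrite -yq.
  have E : dotv d q - dotv d x0 = dotv (q + s *: u) (q - x0) + t * (dotv v q - dotv v x0)
    := @dotv_split3 q x0 u v a s t erefl.
  have := farle x0 Xx0.
  have : h q <= C by apply: HC; exact: mem_set.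
  rewrite /h; lra.
have [q0 Kq0 _] := claim 0 (lexx 0).
have vc : continuous (fun x : 'rV[R]_n => dotv v x).
  apply: (@cont_dotv (fun _ => v) (fun x => x)); first exact: cst_continuous.
  by move=> x; exact: cvg_id.
have [m0 /set_mem [Xm0 Zm0] Hm0] :=
  EVT_max_rV (ex_intro _ q0 Kq0) cK (continuous_subspaceT vc).
case: (lerP (dotv v x0) (dotv v m0)) => H.
  exists m0 => //; split => // x Xx; exact: le_trans (Hx0 x Xx) H.
pose g := dotv v x0 - dotv v m0.
have g0 : 0 < g by rewrite /g subr_gt0.
have t0 : 0 <= C / g + 1 by apply: addr_ge0 => //; apply: divr_ge0 => //; exact: ltW.
have [q Kq Hq] := claim _ t0.
have vq : dotv v q <= dotv v m0 by apply: Hm0; exact: mem_set.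
have tg : (C / g + 1) * g = C + g by field; lra.
have : (C / g + 1) * g <= (C / g + 1) * (dotv v x0 - dotv v q).
  by apply: ler_wpM2l => //; rewrite /g; lra.
lra.
Qed.

End S.

Theorem proposition2 (R : realType) (n : nat) (X : set 'rV[R]_n) :
  compact X ->
  (standard_comonotone X <-> standard_comonotone (conv_hull X)).
Proof. by move=> cX; split; [exact: dir1 | exact: dir2]. Qed.
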